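(* Let $b:X\times X\to[0,\infty)$ on a countable set $X$ be such that $(b,0)$ is a locally finite, connected graph, and let $G$ be a nilpotent group acting cocompactly on $X$ such that $H_{b,0}$ is $G$-invariant. Then every bounded harmonic function (i.e. bounded $f$ with $H_{b,0}f=0$) is constant.
   Context: A graph over $X$ is $(b,c)$ with $\sum_yb(x,y)<\infty$ for all $x$ ($b$ need not be symmetric); here $c=0$. Locally finite: each $x$ has finitely many $y$ with $b(x,y)>0$; connected: any $x,z$ are joined by a finite sequence $y_1,\dots,y_n$ with $b(y_i,y_{i+1})>0$. $H_{b,0}f(x)=\sum_yb(x,y)(f(x)-f(y))$. $T_gf(x)=f(g^{-1}x)$; cocompact: $GV=X$ for some finite $V$; $H$ is $G$-invariant if $T_g$ preserves its domain $\{f:\sum_yb(x,y)|f(y)|<\infty\ \forall x\}$ and $HT_g=T_gH$ for all $g$. *)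

(* Defs.v *)
From HB Require Import structures.
From mathcomp Require Import all_boot all_order all_algebra.
From mathcomp Require Import monoid.
From mathcomp Require Import all_classical all_reals all_analysis.
Set Implicit Arguments. Unset Strict Implicit. Unset Printing Implicit Defensive.
Import Order.TTheory GRing.Theory Num.Theory.
Local Open Scope classical_set_scope.
Local Open Scope ring_scope.

Section GroupDefs.
Variable G : groupType.

Definition gen_subgroup (S : G -> Prop) : G -> Prop :=
  fun x => forall H : G -> Prop,
    H monoid.one ->
    (forall a b, H a -> H b -> H (monoid.mul a b)) ->
    (forall a, H a -> H (monoid.inv a)) ->
    (forall a, S a -> H a) -> H x.

Fixpoint lower_central (n : nat) : G -> Prop :=
  match n with
  | 0 => fun _ => True
  | n'.+1 => gen_subgroup (fun z => exists x y,
               lower_central n' x /\ z = monoid.commg x y)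
  end.

Definition nilpotent_group : Prop :=
  exists n, forall x, lower_central n x -> x = monoid.one.
End GroupDefs.

Definition is_action (G : groupType) (X : Type) (act : G -> X -> X) : Prop :=
  (forall x, act monoid.one x = x) /\
  (forall g h x, act (monoid.mul g h) x = act g (act h x)).

Definition cocompact (G : groupType) (X : eqType) (act : G -> X -> X) : Prop :=
  exists V : seq X, forall x, exists g v, v \in V /\ x = act g v.

Definition transl (G : groupType) (X R : Type) (act : G -> X -> X)
  (g : G) (f : X -> R) : X -> R := fun x => f (act (monoid.inv g) x).

Section Graphs.
Variables (R : realType) (X : countType).

Definition is_graph (b : X -> X -> R) : Prop :=
  (forall x y, 0 <= b x y) /\
  (forall x, (\esum_(y in [set: X]) (b x y)%:E < +oo)%E).

Definition locally_finite (b : X -> X -> R) : Prop :=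
  forall x, finite_set [set y | 0 < b x y].

Definition connected_graph (b : X -> X -> R) : Prop :=
  forall x z, exists s : seq X,
    path (fun u v => 0 < b u v) x s /\ last x s = z.

Definition lap_domain (b : X -> X -> R) (f : X -> R) : Prop :=
  forall x, (\esum_(y in [set: X]) (b x y * `|f y|)%:E < +oo)%E.

(* H_{b,0} f (x) = sum_y b(x,y) (f x - f y); a finitely supported sum
   (the graphs considered here are locally finite) *)
Definition lap (b : X -> X -> R) (f : X -> R) : X -> R :=
  fun x => \sum_(y \in [set: X]) (b x y * (f x - f y)).

Definition lap_invariant (G : groupType) (act : G -> X -> X)
  (b : X -> X -> R) : Prop :=
  forall g : G,
    (forall f, lap_domain b f -> lap_domain b (transl act g f)) /\
    (forall f, lap_domain b f -> lap b (transl act g f) = transl act g (lap b f)).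
End Graphs.

(* Main.v *)
Require Import Defs.
From HB Require Import structures.
From mathcomp Require Import all_boot all_order all_algebra.
From mathcomp Require Import monoid.
From mathcomp Require Import all_classical all_reals all_analysis.
From mathcomp Require Import ring lra.
Import Order.TTheory GRing.Theory Num.Theory.
Local Open Scope ring_scope.
Local Open Scope classical_set_scope.

Lemma grp_id (G : groupType) (g k : G) :
  monoid.mul (monoid.inv g) k =
  monoid.mul (monoid.commg g (monoid.inv k)) (monoid.mul k (monoid.inv g)).
Proof.
rewrite /monoid.commg /monoid.conjg invgK.
rewrite !mulgA -(mulgA _ (monoid.inv k) k) mulVg mulg1 -(mulgA _ g (monoid.inv g)) mulgV mulg1. reflexivity.
Qed.
Lemma act_inv (G : groupType) (X : Type) (act : G -> X -> X) :
  is_action act -> forall g x, act (monoid.inv g) (act g x) = x.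
Proof. by move=> [a1 aM] g x; rewrite -aM mulVg a1. Qed.
Lemma act_inv' (G : groupType) (X : Type) (act : G -> X -> X) :
  is_action act -> forall g x, act g (act (monoid.inv g) x) = x.
Proof. by move=> [a1 aM] g x; rewrite -aM mulgV a1. Qed.
Definition nbr {R : realType} {X : countType} (b : X -> X -> R) x : seq X :=
  finmap.enum_fset (fset_set [set y | 0 < b x y]).

Lemma lapE (R : realType) (X : countType) (b : X -> X -> R) (f : X -> R) x :
  (forall x y, 0 <= b x y) -> locally_finite b ->
  lap b f x = \sum_(y <- nbr b x) b x y * (f x - f y).
Proof.
move=> b0 lf; rewrite /lap /nbr -fsbig_finite //.
apply/esym/fsbig_widen => // y [_ /=] /negP; rewrite lt_neqAle b0 andbT negbK.
by move/eqP=> <-; rewrite /= mul0r.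
Qed.
Arguments lapE {R X b} f x.

Definition harmF {R : realType} {X : countType} (b : X -> X -> R) (f : X -> R) :=
  forall x, \sum_(y <- nbr b x) b x y * (f x - f y) = 0.

Lemma harmF_sub (R : realType) (X : countType) (b : X -> X -> R) f1 f2 :
  harmF b f1 -> harmF b f2 -> harmF b (fun x => f1 x - f2 x).
Proof.
move=> h1 h2 x.
rewrite (eq_bigr (fun y => b x y * (f1 x - f1 y) - b x y * (f2 x - f2 y))).
  by rewrite sumrB h1 h2 subr0.
by move=> y _; rewrite -mulrBr; congr (_ * _); ring.
Qed.

Lemma nbr_mem (R : realType) (X : countType) (b : X -> X -> R) x y :
  locally_finite b -> 0 < b x y -> y \in nbr b x.
Proof. by move=> lf hb; rewrite /nbr in_fset_set //; apply/mem_set. Qed.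

Lemma edge_bound (R : realType) (X : countType) (b : X -> X -> R) x y s f :
  (forall x y, 0 <= b x y) -> locally_finite b -> 0 < b x y ->
  (forall z, f z <= s) -> harmF b f ->
  s - f y <= (\sum_(z <- nbr b x) b x z) / b x y * (s - f x).
Proof.
move=> b0 lf hb hs hf.
have e : \sum_(z <- nbr b x) b x z * (s - f z) = (\sum_(z <- nbr b x) b x z) * (s - f x).
  rewrite mulr_suml (eq_bigr (fun z => b x z * (s - f x) + b x z * (f x - f z))).
    by rewrite big_split /= (hf x) addr0.
  by move=> z _; rewrite -mulrDr; congr (_ * _); ring.
have le : b x y * (s - f y) <= \sum_(z <- nbr b x) b x z * (s - f z).
  rewrite (bigD1_seq y) /=; [|exact: nbr_mem|exact: finmap.fset_uniq].
  rewrite lerDl; apply: sumr_ge0 => z _; apply: mulr_ge0 => //.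
  by rewrite subr_ge0.
rewrite e in le; rewrite mulrAC ler_pdivlMr // mulrC //.
Qed.

Lemma path_bound {R : realType} {X : countType} (b : X -> X -> R) :
  (forall x y, 0 <= b x y) -> locally_finite b ->
  forall p x, path (fun u v => 0 < b u v) x p ->
  exists C, 0 <= C /\ forall s f, (forall z, f z <= s) -> harmF b f ->
    s - f (last x p) <= C * (s - f x).
Proof.
move=> b0 lf; elim=> [|y p IH] x /=.
  by move=> _; exists 1; split => // s f _ _; rewrite mul1r.
move=> /andP[hb hp]; have [C [C0 HC]] := IH y hp.
exists (C * ((\sum_(z <- nbr b x) b x z) / b x y)); split.
  apply: mulr_ge0 => //; apply: divr_ge0; [exact: sumr_ge0|exact: ltW].
move=> s f hs hf; apply: (le_trans (HC s f hs hf)).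
rewrite -mulrA; apply: ler_wpM2l => //; exact: edge_bound.
Qed.

Definition goodf {R : realType} {X : countType} (b : X -> X -> R) (f : X -> R) :=
  (exists M : R, forall x, `|f x| <= M) /\ lap_domain b f /\ (forall x, lap b f x = 0).

Lemma good_harmF (R : realType) (X : countType) (b : X -> X -> R) f :
  (forall x y, 0 <= b x y) -> locally_finite b -> goodf b f -> harmF b f.
Proof. by move=> b0 lf [_ [_ h]] x; rewrite -(lapE f x b0 lf). Qed.

Lemma good_transl (R : realType) (X : countType) (b : X -> X -> R)
  (G : groupType) (act : G -> X -> X) g f :
  lap_invariant act b -> goodf b f -> goodf b (transl act g f).
Proof.
move=> inv [[M hM] [hd hl]]; have [i1 i2] := inv g; split.
  by exists M => x; rewrite /transl.
split; first exact: i1.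
by move=> x; rewrite i2 // /transl hl.
Qed.

Lemma good_opp (R : realType) (X : countType) (b : X -> X -> R) f :
  (forall x y, 0 <= b x y) -> locally_finite b ->
  goodf b f -> goodf b (fun x => - f x).
Proof.
move=> b0 lf [[M hM] [hd hl]]; split.
  by exists M => x; rewrite normrN.
split.
  by move=> x; under eq_esum do rewrite normrN; exact: hd.
move=> x; rewrite lapE // (eq_bigr (fun y => - (b x y * (f x - f y)))).
  by rewrite sumrN -lapE // hl oppr0.
by move=> y _; rewrite -mulrN opprB opprK addrC.
Qed.

Lemma cocompact_bound {R : realType} {X : countType} (b : X -> X -> R)
  (t : X -> X) :
  (forall x y, 0 <= b x y) -> locally_finite b -> connected_graph b ->
  forall V : seq X, exists C, 0 <= C /\ forall v, v \in V ->
    forall s f, (forall z, f z <= s) -> harmF b f -> s - f (t v) <= C * (s - f v).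
Proof.
move=> b0 lf cn; elim=> [|v V [C [C0 HC]]].
  by exists 0; split => //.
have [p [hp hl]] := cn v (t v).
have [C1 [C10 HC1]] := path_bound b b0 lf p v hp.
exists (C + C1); split; first exact: addr_ge0.
move=> w; rewrite inE => /orP[/eqP->|wV] s f hs hf.
  rewrite -hl; apply: (le_trans (HC1 s f hs hf)); rewrite ler_wpM2r ?lerDr //.
  by rewrite subr_ge0.
apply: (le_trans (HC w wV s f hs hf)); rewrite ler_wpM2r ?lerDl //.
by rewrite subr_ge0.
Qed.

Lemma key (R : realType) (X : countType) (b : X -> X -> R)
  (G : groupType) (act : G -> X -> X) :
  (forall x y, 0 <= b x y) -> locally_finite b -> connected_graph b ->
  is_action act -> cocompact act -> lap_invariant act b ->
  forall g : G,
  (forall u, goodf b u -> forall k x,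
     u (act (monoid.inv g) (act k x)) = u (act k (act (monoid.inv g) x))) ->
  forall u, goodf b u -> forall x, u (act (monoid.inv g) x) <= u x.
Proof.
move=> b0 lf cn ia [V hV] inv g Comm u gu x0.
set gi := monoid.inv g.
have [M hM] := gu.1.
pose h z := u (act gi z) - u z.
rewrite -subr_le0; case: (leP (h x0) 0) => // hpos; exfalso.
have hB : forall z, h z <= M + M.
  move=> z; apply: (le_trans (ler_norm _)); apply: (le_trans (ler_normB _ _)).
  exact: lerD.
pose E := range h.
have hsup : has_sup E.
  split; first by exists (h x0); exists x0.
  by exists (M + M) => _ [z _ <-]; exact: hB.
set s := sup E.
have hs : forall z, h z <= s by move=> z; apply: sup_upper_bound => //; exists z.
have s0 : 0 < s := lt_le_trans hpos (hs x0).
have [C [C0 HC]] := cocompact_bound b (act gi) b0 lf cn V.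
have step : forall y, s - h (act gi y) <= C * (s - h y).
  move=> y; have [k [v [vV ->]]] := hV y.
  pose uk := transl act (monoid.inv k) u.
  have guk : goodf b uk by exact: good_transl.
  have ukE : forall z, uk z = u (act k z) by move=> z; rewrite /uk /transl invgK.
  pose phi z := transl act g uk z - uk z.
  have phiE : forall z, phi z = h (act k z).
    by move=> z; rewrite /phi /h /transl Comm // !ukE.
  have hphi : harmF b phi.
    apply: harmF_sub; apply: good_harmF => //; exact: good_transl.
  have phis : forall z, phi z <= s by move=> z; rewrite phiE.
  have := HC v vV s phi phis hphi; rewrite !phiE.
  have e1 : u (act gi (act k v)) = u (act k (act gi v)) by exact: Comm.
  have e2 : u (act gi (act gi (act k v))) = u (act gi (act k (act gi v))).
    rewrite -(ia.2 gi k v) Comm // ia.2 //.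
  by rewrite /h e1 e2.
pose D := C + 1.
have D1 : 1 <= D by rewrite /D lerDr.
have step' : forall y, s - h (act gi y) <= D * (s - h y).
  move=> y; apply: (le_trans (step y)); rewrite ler_wpM2r ?subr_ge0 //.
  by rewrite /D lerDl.
have M0 : 0 <= M := le_trans (normr_ge0 _) (hM x0).
pose n := (Num.trunc ((4 * M) / s)).+1.
have hn : (4 * M) / s < n%:R := truncnS_gt _.
have Dn0 : 0 < D ^+ n by apply: exprn_gt0; apply: lt_le_trans D1.
pose e := s / (2 * D ^+ n).
have e0 : 0 < e by apply: divr_gt0 => //; apply: mulr_gt0.
have [_ [y _ <-] hy] := sup_adherent e0 hsup.
pose w j := iter j (act gi) y.
have claim : forall j, (j <= n)%N ->
    s - h (w j) <= D ^+ j * (s - h y) /\ j%:R * (s / 2) <= u (w j) - u y.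
  elim=> [|j IH] hj.
    by rewrite /w /= expr0 mul1r subrr mul0r; split.
  have [IH1 IH2] := IH (ltnW hj).
  have hw : h (w j) >= s / 2.
    have : D ^+ j * (s - h y) <= D ^+ n * (s - h y).
      by rewrite ler_wpM2r ?subr_ge0 // ler_weXn2l // ltnW.
    have : D ^+ n * (s - h y) < D ^+ n * e.
      by rewrite ltr_pM2l // ltrBlDr -ltrBlDl.
    have -> : D ^+ n * e = s / 2.
      rewrite /e; field; rewrite gt_eqF //.
    move=> h1 h2; have := le_lt_trans IH1 (le_lt_trans h2 h1); lra.
  split.
    rewrite /w iterS -/(w j) exprS -mulrA; apply: (le_trans (step' _)).
    by rewrite ler_wpM2l // ltW // (lt_le_trans ltr01 D1).
  have -> : u (w j.+1) - u y = h (w j) + (u (w j) - u y).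
    by rewrite /h /w iterS; ring.
  rewrite -natr1 mulrDl mul1r addrC; exact: lerD.
have [_ c2] := claim n (leqnn n).
have : u (w n) - u y <= M + M.
  apply: (le_trans (ler_norm _)); apply: (le_trans (ler_normB _ _)); exact: lerD.
have : 4 * M < n%:R * s by rewrite -ltr_pdivrMr.
move: c2; set N := n%:R; move=> c2 h1 h2.
have : N * s <= 4 * M by have := le_trans c2 h2; lra.
lra.
Qed.

Arguments key {R X b G act}.
Arguments good_opp {R X b f}.
Arguments good_harmF {R X b f}.

Lemma S_of_comm (R : realType) (X : countType) (b : X -> X -> R)
  (G : groupType) (act : G -> X -> X) :
  (forall x y, 0 <= b x y) -> locally_finite b -> connected_graph b ->
  is_action act -> cocompact act -> lap_invariant act b ->
  forall g : G,
  (forall u, goodf b u -> forall k x,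
     u (act (monoid.inv g) (act k x)) = u (act k (act (monoid.inv g) x))) ->
  forall u, goodf b u -> forall x, u (act g x) = u x.
Proof.
move=> b0 lf cn ia cc inv g Comm u gu x.
have k1 := key b0 lf cn ia cc inv g Comm u gu (act g x).
have k2 := key b0 lf cn ia cc inv g Comm _ (good_opp b0 lf gu) (act g x).
rewrite act_inv // in k1 k2; apply/le_anti; rewrite k1 andbT.
by rewrite -lerN2.
Qed.

Lemma all_S {R : realType} {X : countType} {b : X -> X -> R}
  {G : groupType} {act : G -> X -> X} :
  (forall x y, 0 <= b x y) -> locally_finite b -> connected_graph b ->
  nilpotent_group G ->
  is_action act -> cocompact act -> lap_invariant act b ->
  forall g : G, forall u, goodf b u -> forall x, u (act g x) = u x.
Proof.
move=> b0 lf cn [n hn] ia cc inv.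
suff H : forall d m, (m + d = n)%N -> forall g, lower_central m g ->
  forall u, goodf b u -> forall x, u (act g x) = u x.
  by move=> g; apply: (H n 0%N) => //.
elim=> [|d IH] m hmd g hg.
  rewrite addn0 in hmd; subst m; rewrite (hn g hg) => u gu x.
  by rewrite ia.1.
have IH2 : (m.+1 + d = n)%N by rewrite addSnnS.
have IH3 := IH m.+1 IH2.
apply: S_of_comm => // u gu k x.
have -> : act (monoid.inv g) (act k x) =
  act (monoid.commg g (monoid.inv k)) (act (monoid.mul k (monoid.inv g)) x).
  by rewrite -!ia.2 grp_id.
rewrite IH3 // ?ia.2 //.
by move=> H H1 HM HI HS; apply: HS; exists g, (monoid.inv k).
Qed.

Lemma seq_max (R : realType) (X : countType) (f : X -> R) (V : seq X) :
  forall a, exists v0, v0 \in a :: V /\ forall w, w \in a :: V -> f w <= f v0.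
Proof.
elim: V => [|a' V IH] a.
  by exists a; split; rewrite ?mem_head // => w; rewrite inE => /eqP->.
have [v0 [v0V hv0]] := IH a'.
case: (leP (f a) (f v0)) => ha.
  exists v0; split; first by rewrite inE v0V orbT.
  by move=> w; rewrite inE => /orP[/eqP->|]; [|exact: hv0].
exists a; split; first exact: mem_head.
move=> w; rewrite inE => /orP[/eqP->//|/hv0 h]; exact: (le_trans h (ltW ha)).
Qed.

Theorem corollary4 (R : realType) (X : countType) (b : X -> X -> R)
  (G : groupType) (act : G -> X -> X) :
  is_graph b -> locally_finite b -> connected_graph b ->
  nilpotent_group G -> is_action act -> cocompact act ->
  lap_invariant act b ->
  forall f : X -> R,
    (exists M : R, forall x, `|f x| <= M) ->
    lap_domain b f ->
    (forall x, lap b f x = 0) ->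
    exists c : R, forall x, f x = c.
Proof.
move=> [b0 _] lf cn nil ia cc inv f fb fd fh.
have gf : goodf b f by split.
have inv_f := fun g => all_S b0 lf cn nil ia cc inv g f gf.
have [V hV] := cc.
case: V hV => [|a V] hV.
  by exists 0 => x; have [g [v [//]]] := hV x.
have [v0 [v0V hv0]] := seq_max _ _ f V a.
have fmax : forall x, f x <= f v0.
  by move=> x; have [g [v [vV ->]]] := hV x; rewrite inv_f; exact: hv0.
exists (f v0) => z.
have [p [hp hl]] := cn v0 z.
have [C [C0 HC]] := path_bound b b0 lf p v0 hp.
have := HC (f v0) f fmax (good_harmF b0 lf gf).
rewrite hl subrr mulr0 subr_le0 => h.
by apply/le_anti; rewrite h fmax.
Qed.
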